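(* For every prime $p$ and every integer $t\ge 1$, \[ \overline{M}(p^t)=\sum_{j=1}^{p^t} f\!\left(\left\lfloor \frac{p^t}{j}\right\rfloor\right)-\sum_{j=1}^{p^{t-1}} f\!\left(\left\lfloor \frac{p^{t-1}}{j}\right\rfloor\right)+(p-1)\sum_{s=1}^{t}p^{s-1}\sum_{m=1}^{p^{t-s}} f\!\left(\left\lfloor \frac{p^t}{1+(m-1)p^s}\right\rfloor\right). \]
   Context: For a nonempty finite set $A$ of positive integers, $(A)$ denotes the greatest common divisor of the elements of $A$. For $m\in\mathbb{N}$, $f(m)$ is the number of nonempty subsets $A\subseteq\{1,2,\ldots,m\}$ with $(A)=1$. For $n\in\mathbb{N}$, \[ \overline{M}(n)=\sum_{\substack{\emptyset\ne A\subseteq\{1,\ldots,n\}\\ \gcd((A),n)=1}}\gcd((A)-1,n), \] with the convention $\gcd(0,n)=n$. *)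

(* Defs.v *)
From mathcomp Require Import all_boot all_order all_algebra.
Set Implicit Arguments. Unset Strict Implicit. Unset Printing Implicit Defensive.

(* A subset of {1,...,m} is encoded as A : {set 'I_m}, where i : 'I_m stands
   for the integer i.+1. *)
Definition setgcd (m : nat) (A : {set 'I_m}) : nat := \big[gcdn/0]_(i in A) i.+1.

Definition f (m : nat) : nat :=
  #|[set A : {set 'I_m} | (A != set0) && (setgcd A == 1)]|.

(* Mbar n; note gcdn 0 n = n matches the convention gcd(0,n)=n *)
Definition Mbar (n : nat) : nat :=
  \sum_(A : {set 'I_n} | (A != set0) && coprime (setgcd A) n)
     gcdn (setgcd A).-1 n.

(* Main.v *)
Require Import Defs.
From mathcomp Require Import all_boot all_order all_algebra.
Import GRing.Theory.
From mathcomp Require Import zify.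

Lemma sg_dvd {n} {A : {set 'I_n}} {x : 'I_n} : x \in A -> setgcd A %| x.+1.
Proof. by move=> xA; rewrite /setgcd (bigD1 x) //= dvdn_gcdl. Qed.

Lemma sg_bounds {n} {A : {set 'I_n}} : A != set0 -> 0 < setgcd A <= n.
Proof.
case/set0Pn=> x xA; have d := sg_dvd xA.
have x0 : 0 < x.+1 by [].
apply/andP; split.
  by case E: (setgcd A) d => [|k] //; rewrite dvd0n.
exact: leq_trans (dvdn_leq x0 d) (ltn_ord x).
Qed.

Lemma hm_lt {n d} (i : 'I_(n %/ d)) : ((i.+1) * d).-1 < n.
Proof.
case: d i => [|d] i; first by case: i; rewrite divn0.
have h1 : i.+1 * d.+1 <= n %/ d.+1 * d.+1 by rewrite leq_mul2r ltn_ord orbT.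
have h2 := leq_trunc_div n d.+1.
rewrite mulnS /=; lia.
Qed.

Definition hm {n d} (i : 'I_(n %/ d)) : 'I_n := Ordinal (hm_lt i).

Lemma hmS {n d} (i : 'I_(n %/ d)) : 0 < d -> (hm i).+1 = i.+1 * d.
Proof. by move=> d0; rewrite /= prednK // muln_gt0 d0. Qed.

Lemma hm_inj n d : 0 < d -> injective (@hm n d).
Proof.
move=> d0 i j /(congr1 (fun x : 'I_n => (val x).+1)) /=.
rewrite !hmS // => /eqP; rewrite eqn_pmul2r // eqSS => /eqP ij.
exact: val_inj.
Qed.

Lemma sg_mul n (A : {set 'I_n}) d : setgcd A * d = \big[gcdn/0]_(i in A) (i.+1 * d).
Proof.
rewrite /setgcd.
exact: (big_morph (fun x => x * d) (fun a b => muln_gcdl a b d) (mul0n d)).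
Qed.

Lemma sg_img {n d} (B : {set 'I_(n %/ d)}) : 0 < d ->
  setgcd (hm @: B) = setgcd B * d.
Proof.
move=> d0; rewrite sg_mul /setgcd big_imset /=; last by move=> i j _ _; apply: hm_inj.
by apply: eq_bigr => i _; rewrite hmS.
Qed.

Lemma hm_surj {n d} {x : 'I_n} : 0 < d -> d %| x.+1 -> exists i : 'I_(n %/ d), hm i = x.
Proof.
move=> d0 /dvdnP [k hk].
have k0 : 0 < k by case: k hk.
have kle : k.-1 < n %/ d.
  rewrite prednK // leq_divRL // -hk; exact: ltn_ord.
exists (Ordinal kle); apply: val_inj; by rewrite /= prednK // -hk.
Qed.

Lemma cnt n d : 0 < d ->
  #|[set A : {set 'I_n} | (A != set0) && (setgcd A == d)]| = f (n %/ d).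
Proof.
move=> d0; rewrite /f -(card_imset [set B : {set 'I_(n %/ d)} | (B != set0) && (setgcd B == 1)] (imset_inj (@hm_inj n d d0))).
apply: eq_card => A; rewrite inE; apply/idP/imsetP.
- case/andP=> An0 /eqP sgA.
  have eA : hm @: [set i : 'I_(n %/ d) | hm i \in A] = A.
    apply/setP => x; apply/imsetP/idP => [[i]|xA]; first by rewrite inE => hi ->.
    have := sg_dvd xA; rewrite sgA => /(hm_surj d0) [i hi].
    by exists i; rewrite ?inE hi.
  exists [set i : 'I_(n %/ d) | hm i \in A]; last by rewrite eA.
  rewrite inE; apply/andP; split.
    by apply: contra An0 => /eqP e; rewrite -eA e imset0.
  have := sg_img [set i : 'I_(n %/ d) | hm i \in A] d0; rewrite eA sgA -{1}(mul1n d) => /eqP.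
  by rewrite eqn_pmul2r // eq_sym.
- case=> B; rewrite inE => /andP [Bn0 /eqP sgB] ->.
  by rewrite sg_img // sgB mul1n eqxx andbT imset_eq0.
Qed.

Lemma Mbar_dec n : Mbar n =
  \sum_(1 <= d < n.+1 | coprime d n) f (n %/ d) * gcdn d.-1 n.
Proof.
rewrite /Mbar (partition_big (fun A : {set 'I_n} => (inord (setgcd A) : 'I_n.+1))
   (fun j : 'I_n.+1 => (0 < j) && coprime j n)); last first.
  move=> A /andP [An0 cA]; have /andP [b1 b2] := sg_bounds An0.
  by rewrite inordK ?ltnS // b1.
rewrite (big_nat_widenl _ 0) // big_mkord.
apply: eq_big => [j|j /andP [j0 cj]]; first by rewrite andbC.
rewrite (eq_bigl (fun A => A \in [set A : {set 'I_n} | (A != set0) && (setgcd A == j)])); last first.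
  move=> A; rewrite inE; have [->|An0] := eqVneq A set0; first by [].
  have /andP [b1 b2] := sg_bounds An0.
  rewrite -val_eqE /= inordK ?ltnS //.
  by case: eqP => [->|]; rewrite ?andbT ?andbF.
rewrite (eq_bigr (fun _ => gcdn j.-1 n)); last first.
  by move=> A; rewrite inE => /andP [_ /eqP ->].
by rewrite sum_nat_const cnt.
Qed.

Lemma geo p j : 0 < p -> 1 + p.-1 * \sum_(1 <= s < j.+1) p ^ s.-1 = p ^ j.
Proof.
move=> p0; elim: j => [|j IH]; first by rewrite big_geq // muln0.
rewrite big_nat_recr //= mulnDr addnA IH expnS.
case: p p0 {IH} => [|q] _ //=; lia.
Qed.

Lemma gcd_split p t k : prime p ->
  gcdn k (p ^ t) = 1 + p.-1 * \sum_(1 <= s < t.+1) p ^ s.-1 * (p ^ s %| k).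
Proof.
move=> pp; have p1 := prime_gt1 pp.
have [j jt gE] : exists2 j, j <= t & gcdn k (p ^ t) = p ^ j.
  by apply/dvdn_pfactor => //; apply: dvdn_gcdr.
rewrite gE (big_cat_nat _ (n:=j.+1)) //=.
rewrite [X in _ * (_ + X)]big1_seq ?addn0; last first.
  move=> s /andP [_]; rewrite mem_index_iota => /andP [js st].
  have h : p ^ s %| p ^ t by rewrite dvdn_Pexp2l // -ltnS.
  have -> : (p ^ s %| k) = (p ^ s %| gcdn k (p ^ t)) by rewrite dvdn_gcd h andbT.
  by rewrite gE dvdn_Pexp2l // leqNgt js muln0.
rewrite -(@geo p j (ltnW p1)); congr (1 + p.-1 * _).
apply: eq_big_nat => s /andP [s1 sj].
have h : p ^ s %| p ^ t by rewrite dvdn_Pexp2l //; apply: leq_trans jt; rewrite -ltnS.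
have -> : (p ^ s %| k) = (p ^ s %| gcdn k (p ^ t)) by rewrite dvdn_gcd h andbT.
by rewrite gE dvdn_Pexp2l // -ltnS sj muln1.
Qed.

Lemma shift_sum (h : nat -> nat) a q :
  \sum_(a <= i < a + q) h i = \sum_(0 <= r < q) h (a + r).
Proof.
elim: q => [|q IH]; first by rewrite addn0 !big_geq.
by rewrite addnS !big_nat_recr ?leq_addr //= IH.
Qed.

Lemma block_sum (h : nat -> nat) q M :
  \sum_(0 <= i < M * q) h i = \sum_(0 <= m < M) \sum_(0 <= r < q) h (m * q + r).
Proof.
elim: M => [|M IH]; first by rewrite mul0n !big_geq.
rewrite mulSnr (big_cat_nat _ (n := M * q)) ?leq_addr //= IH shift_sum.
by rewrite [in RHS]big_nat_recr.
Qed.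

Lemma mult_sum (F : nat -> nat) q M : 0 < q ->
  \sum_(1 <= d < (M * q).+1 | q %| d) F d = \sum_(1 <= e < M.+1) F (e * q).
Proof.
move=> q0; rewrite big_add1 /= big_mkcond /= block_sum big_add1 /=.
apply: eq_big_nat => m _.
case: q q0 => [|q] // _.
rewrite big_nat_recr //= big1_seq ?add0n.
  by rewrite -addnS -mulSnr dvdn_mull.
move=> r /andP [_]; rewrite mem_index_iota => /andP [_ rq].
rewrite -addnS dvdn_addr ?dvdn_mull //.
case: ifP => // /dvdn_leq; lia.
Qed.

Lemma cong1_sum (F : nat -> nat) q M : 0 < q ->
  \sum_(1 <= d < (M * q).+1 | q %| d.-1) F d = \sum_(1 <= m < M.+1) F (1 + m.-1 * q).
Proof.
move=> q0; rewrite big_add1 /= big_mkcond /= block_sum big_add1 /=.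
apply: eq_big_nat => m _.
rewrite big_ltn //= addn0 dvdn_mull // big1_seq ?addn0 //=.
move=> r; rewrite mem_index_iota => /andP [r0 rq].
rewrite dvdn_addr ?dvdn_mull //.
case: ifP => // /dvdn_leq; lia.
Qed.

Lemma cong_cop p t s d : prime p -> 0 < t -> 0 < s -> 0 < d -> p ^ s %| d.-1 ->
  coprime d (p ^ t).
Proof.
move=> pp t0 s0 d0 h; rewrite coprime_pexpr // coprime_sym prime_coprime //.
apply/negP => pd.
have pd1 : p %| d.-1 by apply: dvdn_trans h; rewrite dvdn_exp // (prime_gt0 pp).
have : p %| d.-1 + 1 by rewrite addn1 prednK.
rewrite dvdn_addr // dvdn1 => /eqP p1.
by rewrite p1 in pp.
Qed.

Lemma key p t : prime p -> 0 < t ->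
  Mbar (p ^ t) + \sum_(1 <= j < (p ^ t.-1).+1) f (p ^ t.-1 %/ j) =
  \sum_(1 <= j < (p ^ t).+1) f (p ^ t %/ j)
  + p.-1 * \sum_(1 <= s < t.+1) p ^ s.-1 *
       \sum_(1 <= m < (p ^ (t - s)).+1) f (p ^ t %/ (1 + m.-1 * p ^ s)).
Proof.
move=> pp t0; have p0 := prime_gt0 pp.
rewrite Mbar_dec.
rewrite (eq_bigr (fun d => f (p ^ t %/ d) + p.-1 * \sum_(1 <= s < t.+1)
   p ^ s.-1 * ((p ^ s %| d.-1) * f (p ^ t %/ d)))); last first.
  move=> d _; rewrite (gcd_split _ _ _ pp) mulnDr muln1 mulnCA big_distrr /=.
  congr (_ + _ * _); apply: eq_bigr => s _; lia.
rewrite big_split /= -big_distrr /= exchange_big_nat /=.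
have E1 : \sum_(1 <= i < (p ^ t).+1 | ~~ coprime i (p ^ t)) f (p ^ t %/ i) =
          \sum_(1 <= j < (p ^ t.-1).+1) f (p ^ t.-1 %/ j).
  rewrite (eq_bigl (fun d => p %| d)); last first.
    by move=> d; rewrite coprime_pexpr // coprime_sym prime_coprime // negbK.
  rewrite -{1}(prednK t0) expnSr mult_sum //.
  by apply: eq_bigr => e _; rewrite -{1}(prednK t0) expnSr divnMr.
have E2 : \sum_(1 <= j < t.+1)
     \sum_(1 <= i < (p ^ t).+1 | coprime i (p ^ t))
        p ^ j.-1 * ((p ^ j %| i.-1) * f (p ^ t %/ i)) =
   \sum_(1 <= s < t.+1) p ^ s.-1 *
       \sum_(1 <= m < (p ^ (t - s)).+1) f (p ^ t %/ (1 + m.-1 * p ^ s)).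
  apply: eq_big_nat => s /andP [s1 st].
  rewrite -big_distrr /=; congr (_ * _).
  transitivity (\sum_(1 <= i < (p ^ t).+1 | p ^ s %| i.-1) f (p ^ t %/ i)).
    rewrite big_mkcond [RHS]big_mkcond; apply: eq_big_nat => i /andP [i1 _] /=.
    case: (boolP (p ^ s %| i.-1)) => h.
      by rewrite (@cong_cop p t s i pp t0 s1 i1 h) mul1n.
    by rewrite mul0n; case: ifP.
  have E : p ^ t = p ^ (t - s) * p ^ s by rewrite -expnD subnK // -ltnS.
  by rewrite {1}E cong1_sum ?expn_gt0 ?p0.
rewrite [in RHS](bigID (fun d => coprime d (p ^ t)) xpredT) /= E1 E2; lia.
Qed.

Import GRing.Theory.
Local Open Scope ring_scope.

Theorem mainTheorem3 (p t : nat) (hp : prime p) (ht : (1 <= t)%N) :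
  (Mbar (p ^ t))%:Z =
    (\sum_(1 <= j < (p ^ t).+1) (f ((p ^ t) %/ j))%:Z)
  - (\sum_(1 <= j < (p ^ t.-1).+1) (f ((p ^ t.-1) %/ j))%:Z)
  + (p.-1)%:Z * (\sum_(1 <= s < t.+1)
        (p ^ s.-1)%:Z * \sum_(1 <= m < (p ^ (t - s)).+1)
            (f ((p ^ t) %/ (1 + (m.-1) * p ^ s)))%:Z).
Proof.
have K := @key p t hp ht.
have PS : forall (m n : nat) (F : nat -> nat),
    (\sum_(m <= i < n) F i)%N%:Z = \sum_(m <= i < n) (F i)%:Z.
  by move=> m n F; rewrite (big_morph Posz PoszD (erefl 0%:Z)).
have S1 : \sum_(1 <= j < (p ^ t).+1) (f ((p ^ t) %/ j))%:Z =
   (\sum_(1 <= j < (p ^ t).+1) f ((p ^ t) %/ j))%N%:Z by rewrite PS.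
have S2 : \sum_(1 <= j < (p ^ t.-1).+1) (f ((p ^ t.-1) %/ j))%:Z =
   (\sum_(1 <= j < (p ^ t.-1).+1) f ((p ^ t.-1) %/ j))%N%:Z by rewrite PS.
have S3 : \sum_(1 <= s < t.+1)
        (p ^ s.-1)%:Z * \sum_(1 <= m < (p ^ (t - s)).+1)
            (f ((p ^ t) %/ (1 + (m.-1) * p ^ s)))%:Z =
   (\sum_(1 <= s < t.+1) p ^ s.-1 * \sum_(1 <= m < (p ^ (t - s)).+1)
            f ((p ^ t) %/ (1 + (m.-1) * p ^ s)))%N%:Z.
  rewrite PS; apply: eq_bigr => s _; by rewrite PoszM PS.
rewrite S1 S2 S3.
move: K => /(congr1 Posz); rewrite !PoszD PoszM => K.
lia.
Qed.
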